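(* Consider logistic regression Bayesian networks on $m$ binary nodes as described in the context, for an ensemble $\mathcal{G}$ of DAGs on $[m]$ and parameter maps $\mathcal{P}(\mathcal{G})$. Then $$\Delta_{\max}:=\max_{i\in[m]}\max_{G\in\mathcal{G}}\sup_{\Theta\in\mathcal{P}(\mathcal{G})}\mathbb{E}_{X_{\pi_i(G)}}[\Delta(\eta_i,\eta_0)]\le \frac{w^1_{\max}}{2},\qquad \sup_{\Theta\in\mathcal{P}(\mathcal{G})}I(S;G\mid\Theta)\le\frac{n\,m\,w^1_{\max}}{2}.$$
   Context: Each $X_i\in\{0,1\}$. Given DAG $G$ and parameter map $\Theta$, node $i$ has a weight vector $w_i=\Theta_i(G)\in\mathbb{R}^{|\pi_i(G)|}$, and $X_i\mid X_{\pi_i(G)}\sim\mathrm{Bernoulli}(\sigma(\langle X_{\pi_i(G)},w_i\rangle))$ with $\sigma(t)=(1+e^{-t})^{-1}$; the reference (no-parent) distribution is $P_i(\varnothing,\Theta)=\mathrm{Bernoulli}(1/2)$. $w^1_{\max}:=\sup_{\Theta\in\mathcal{P}(\mathcal{G})}\max_{G\in\mathcal{G}}\max_{i}\|\Theta_i(G)\|_1$. The joint distribution is $\prod_iP_i(x_i\mid x_{\pi_i(G)})$; $S$ is $n$ i.i.d. samples from it; $I(S;G\mid\Theta)$ is the mutual information between $S$ and $G$ with $G$ uniform on $\mathcal{G}$ and $\Theta$ fixed. In the Bernoulli exponential family (sufficient statistic $x$), $\eta_i=\langle w_i,X_{\pi_i(G)}\rangle$ with expected sufficient statistic $\sigma(\eta_i)$,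 and $\eta_0=0$ with expected sufficient statistic $1/2$; $\Delta(\eta_1,\eta_2)=(\eta_1-\eta_2)(\tau(\eta_1)-\tau(\eta_2))$. $\mathbb{E}_{X_{\pi_i(G)}}$ is expectation over parents' values under the network's distribution. *)

(* Defs.v *)
From HB Require Import structures.
From mathcomp Require Import all_boot all_order all_algebra.
From mathcomp Require Import all_classical all_reals all_analysis.
Set Implicit Arguments. Unset Strict Implicit. Unset Printing Implicit Defensive.
Import Order.TTheory GRing.Theory Num.Theory.
Local Open Scope ring_scope.

(* A directed graph on the node set [m] = 'I_m, given by its parent sets:
   G i = pi_i(G), the set of parents of node i (edges j -> i for j \in G i). *)
Definition dag_t (m : nat) := {ffun 'I_m -> {set 'I_m}}.

(* G is acyclic: there is no edge j -> i with a directed path from i back to j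
   (connect is reflexive, so self-loops are excluded as well). *)
Definition is_dag (m : nat) (G : dag_t m) : bool :=
  [forall i : 'I_m, forall j : 'I_m,
      (j \in G i) ==> ~~ connect [rel a b | a \in G b] i j].

Definition config (m : nat) := {ffun 'I_m -> bool}.

(* A parameter map Theta: for every DAG G and node i, a weight vector
   Theta G i, whose coordinates indexed by the parents j \in pi_i(G) are the
   entries of w_i = Theta_i(G) (other coordinates are irrelevant). *)
Definition param (R : realType) (m : nat) := dag_t m -> 'I_m -> 'I_m -> R.

Definition sigmoid (R : realType) (t : R) : R := (1 + expR (- t))^-1.

Definition eta (R : realType) (m : nat) (Th : param R m) (G : dag_t m)
  (i : 'I_m) (x : config m) : R :=
  \sum_(j in G i) Th G i j * (x j)%:R.

(* Reference natural parameter eta_0 = 0 (Bernoulli(1/2)). *)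
Definition eta0 (R : realType) : R := 0.

Definition l1norm (R : realType) (m : nat) (Th : param R m) (G : dag_t m)
  (i : 'I_m) : R :=
  \sum_(j in G i) `|Th G i j|.

Definition node_prob (R : realType) (m : nat) (Th : param R m) (G : dag_t m)
  (i : 'I_m) (x : config m) : R :=
  if x i then sigmoid (eta Th G i x) else 1 - sigmoid (eta Th G i x).

Definition joint (R : realType) (m : nat) (Th : param R m) (G : dag_t m)
  (x : config m) : R :=
  \prod_(i < m) node_prob Th G i x.

Definition sample_prob (R : realType) (m n : nat) (Th : param R m)
  (G : dag_t m) (S : {ffun 'I_n -> config m}) : R :=
  \prod_(k < n) joint Th G (S k).

(* Delta(eta1, eta2) = (eta1 - eta2)(tau(eta1) - tau(eta2)), tau = sigmoid the
   expected sufficient statistic of the Bernoulli family (tau(0) = 1/2). *)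
Definition Delta (R : realType) (e1 e2 : R) : R :=
  (e1 - e2) * (sigmoid e1 - sigmoid e2).

Definition expected_Delta (R : realType) (m : nat) (Th : param R m)
  (G : dag_t m) (i : 'I_m) : R :=
  \sum_(x : config m) joint Th G x * Delta (eta Th G i x) (eta0 R).

Definition sample_marg (R : realType) (m n : nat) (Th : param R m)
  (Gs : {set dag_t m}) (S : {ffun 'I_n -> config m}) : R :=
  \sum_(G in Gs) #|Gs|%:R^-1 * sample_prob Th G S.

Definition mutual_info (R : realType) (m n : nat) (Th : param R m)
  (Gs : {set dag_t m}) : R :=
  \sum_(G in Gs) #|Gs|%:R^-1 *
    \sum_(S : {ffun 'I_n -> config m})
       sample_prob Th G S * ln (sample_prob Th G S / sample_marg Th Gs S).

Local Open Scope classical_set_scope.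
Local Open Scope ereal_scope.

Definition w1max (R : realType) (m : nat) (P : set (param R m))
  (Gs : {set dag_t m}) : \bar R :=
  ereal_sup [set y : \bar R | exists Th, P Th /\ exists G, G \in Gs /\
               exists i : 'I_m, y = (l1norm Th G i)%:E].

Definition Delta_max (R : realType) (m : nat) (P : set (param R m))
  (Gs : {set dag_t m}) : \bar R :=
  ereal_sup [set y : \bar R | exists Th, P Th /\ exists G, G \in Gs /\
               exists i : 'I_m, y = (expected_Delta Th G i)%:E].

Definition sup_MI (R : realType) (m n : nat) (P : set (param R m))
  (Gs : {set dag_t m}) : \bar R :=
  ereal_sup [set y : \bar R | exists Th, P Th /\ y = (mutual_info n Th Gs)%:E].

(* Main.v *)
Require Import Defs.
From HB Require Import structures.
From mathcomp Require Import all_boot all_order all_algebra.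
From mathcomp Require Import all_classical all_reals all_analysis.
From mathcomp Require Import ring lra.
Import Order.TTheory GRing.Theory Num.Theory.
Set Implicit Arguments. Unset Strict Implicit.
Local Open Scope ring_scope.
Section S.
Variable R : realType.

Lemma sig_gt0 (t : R) : 0 < sigmoid t.
Proof. by rewrite /sigmoid invr_gt0 ltr_pwDl ?expR_gt0. Qed.

Lemma sig_lt1 (t : R) : sigmoid t < 1.
Proof.
rewrite /sigmoid invf_lt1; first by rewrite ltrDl expR_gt0.
by rewrite ltr_pwDl ?expR_gt0.
Qed.

Lemma sigN (t : R) : 1 - sigmoid t = sigmoid (- t).
Proof.
rewrite /sigmoid opprK expRN.
have h := expR_gt0 t.
field; apply/andP; split; rewrite lt0r_neq0 //; lra.
Qed.

Lemma sig0 : sigmoid (0:R) = 2^-1.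
Proof. by rewrite /sigmoid oppr0 expR0. Qed.

Lemma two_sig_le (t : R) : 2 * sigmoid t <= expR (t / 2).
Proof.
rewrite /sigmoid.
set a := expR (t/2).
have ha : 0 < a by apply: expR_gt0.
have e : expR (- t) = (a ^+ 2)^-1.
  by rewrite /a -expRM_natr divfK // expRN.
rewrite e.
have -> : (1 + (a ^+ 2)^-1)^-1 = a ^+ 2 / (a ^+ 2 + 1).
  field; apply/andP; split; rewrite lt0r_neq0 //; nra.
rewrite mulrA ler_pdivrMr; last by nra.
have : 0 <= a * (a - 1) ^+ 2 by apply: mulr_ge0; [lra| apply: sqr_ge0].
nra.
Qed.

Lemma two_np_le (t : R) (b : bool) :
  2 * (if b then sigmoid t else 1 - sigmoid t) <= expR (`|t| / 2).
Proof.
case: b.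
  apply: (le_trans (two_sig_le t)); rewrite ler_expR; rewrite ler_pM2r //.
  exact: ler_norm.
rewrite sigN; apply: (le_trans (two_sig_le _)); rewrite ler_expR; rewrite ler_pM2r //.
by rewrite -normrN ler_norm.
Qed.

Lemma Delta0_le (t : R) : Delta t (eta0 R) <= `|t| / 2.
Proof.
rewrite /Delta /eta0 subr0 sig0.
have h1 := sig_gt0 t; have h2 := sig_lt1 t.
have : `|sigmoid t - 2^-1| <= 2^-1.
  rewrite ler_norml; apply/andP; split; lra.
move=> hn.
apply: (le_trans (ler_norm _)); rewrite normrM.
by apply: ler_wpM2l.
Qed.
End S.

Section J.
Variables (R : realType) (m : nat) (Th : param R m) (G : dag_t m).
Hypothesis hG : is_dag G.

Definition erel : rel 'I_m := [rel a b | a \in G b].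

Lemma dagE j i : j \in G i -> ~~ connect erel i j.
Proof. by move=> h; move/forallP: hG => /(_ i) /forallP /(_ j) /implyP; apply. Qed.

Lemma sink_ex (U : {set 'I_m}) : U != finset.set0 ->
  exists2 s, s \in U & forall j, j \in U -> s \notin G j.
Proof.
case/set0Pn=> s0 hs0.
pose F k := #|[set a | connect erel a k]|.
case: (@arg_maxnP _ s0 (mem U) F hs0) => s sU smax.
exists s => // j jU; apply/negP => sj.
have := smax j jU; rewrite /= leqNgt => /negP; apply.
apply: proper_card; apply/properP; split.
  apply/fintype.subsetP => a; rewrite !inE => h.
  by apply: (connect_trans h); apply: connect1.
exists j; rewrite !inE ?connect0 //.
exact: dagE sj.
Qed.

Definition flip (s : 'I_m) (x : config m) : config m :=
  [ffun j => if j == s then ~~ x s else x j].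

Lemma flipK s : involutive (flip s).
Proof.
move=> x; apply/ffunP => j; rewrite !ffunE.
by case: eqP => [->|]; rewrite ?eqxx ?negbK.
Qed.

Lemma eq_eta i (x y : config m) : (forall j, j \in G i -> x j = y j) -> Defs.eta Th G i x = Defs.eta Th G i y.
Proof. by move=> h; apply: eq_bigr => j /h ->. Qed.

Lemma np_flip s i x : i != s -> s \notin G i ->
  node_prob Th G i (flip s x) = node_prob Th G i x.
Proof.
move=> his hs; rewrite /node_prob ffunE (negbTE his) (@eq_eta i (flip s x) x) //.
move=> j hj; rewrite ffunE; case: eqP => // ejs.
by move: hs; rewrite -ejs hj.
Qed.

Lemma np_flip_self s x : node_prob Th G s (flip s x) + node_prob Th G s x = 1.
Proof.
have ns : s \notin G s by apply/negP => h; have := @dagE s s h; rewrite connect0.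
rewrite /node_prob ffunE eqxx (@eq_eta s (flip s x) x).
  by case: (x s) => /=; lra.
move=> j hj; rewrite ffunE; case: eqP => // ejs.
by subst j; rewrite hj in ns.
Qed.

Definition fU (U : {set 'I_m}) : R :=
  \sum_(x : config m) \prod_(i in U) node_prob Th G i x.

Lemma fU_step (U : {set 'I_m}) s : s \in U -> (forall j, j \in U -> s \notin G j) ->
  fU U * 2 = fU (U :\ s).
Proof.
move=> sU hs.
pose Fx x := \prod_(i in U :\ s) node_prob Th G i x.
have FxE x : Fx (flip s x) = Fx x.
  apply: eq_bigr => i; rewrite !inE => /andP [his iU].
  exact: np_flip his (hs i iU).
have e1 : fU U = \sum_x node_prob Th G s x * Fx x.
  by apply: eq_bigr => x _; rewrite (bigD1 s sU) /=; congr (_ * _); apply: eq_bigl => i; rewrite !inE andbC.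
have e2 : fU U = \sum_x node_prob Th G s (flip s x) * Fx x.
  rewrite e1 (reindex_inj (inv_inj (@flipK s))) /=.
  by apply: eq_bigr => x _; rewrite FxE.
rewrite mulr_natr mulr2n {1}e2 e1 -big_split /=.
by apply: eq_bigr => x _; rewrite -mulrDl np_flip_self mul1r.
Qed.

Lemma fU_card (U : {set 'I_m}) : fU U * 2 ^+ #|U| = #|{: config m}|%:R.
Proof.
move: (erefl #|U|); move: {2}#|U| => k; elim: k U => [|k IH] U hU.
  rewrite hU; move/eqP: hU; rewrite cards_eq0 => /eqP ->.
  rewrite expr0 mulr1 /fU.
  under eq_bigr do rewrite big_set0.
  by rewrite sumr_const.
have : U != finset.set0 by rewrite -card_gt0 hU.
case/sink_ex => s sU hs.
have hk : #|U :\ s| = k by move: hU; rewrite (cardsD1 s U) sU add1n => -[].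
by rewrite hU exprS mulrA (@fU_step U s sU hs) -hk IH.
Qed.

Lemma joint_sum : \sum_(x : config m) joint Th G x = 1.
Proof.
have := fU_card [set: 'I_m].
rewrite cardsT card_ord card_ffun card_bool card_ord natrX.
have h : (2:R) ^+ m != 0 by rewrite expf_neq0.
move/(congr1 (fun y => y / 2 ^+ m)); rewrite /= divff // mulfK // /fU => <-.
by apply: eq_bigr => x _; rewrite /joint; apply: eq_bigl => i; rewrite inE.
Qed.
End J.

Section C.
Variables (R : realType) (m : nat) (Th : param R m).

Lemma np_pos G i x : 0 < node_prob Th G i x.
Proof. by rewrite /node_prob; case: (x i); rewrite ?sigN sig_gt0. Qed.

Lemma joint_pos G x : 0 < joint Th G x.
Proof. by apply: prodr_gt0 => i _; apply: np_pos. Qed.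

Lemma eta_le G i x : `|Defs.eta Th G i x| <= l1norm Th G i.
Proof.
apply: (le_trans (ler_norm_sum _ _ _)); apply: ler_sum => j _.
rewrite normrM -[X in _ <= X]mulr1; apply: ler_wpM2l => //.
by case: (x j); rewrite ?normr1 ?normr0.
Qed.

Definition Ltot G := \sum_(i < m) l1norm Th G i.

Lemma joint_le G x : joint Th G x * 2 ^+ m <= expR (Ltot G / 2).
Proof.
have -> : joint Th G x * 2 ^+ m = \prod_(i < m) (2 * node_prob Th G i x).
  by rewrite big_split /= prodr_const card_ord mulrC.
rewrite /Ltot mulr_suml expR_sum; apply: ler_prod => i _.
rewrite mulr_ge0 ?(ltW (np_pos _ _ _)) //=.
rewrite /node_prob; apply: (le_trans (two_np_le _ _)); rewrite ler_expR ler_pM2r //.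
exact: eta_le.
Qed.
End C.

Section D.
Variables (R : realType) (m n : nat) (Th : param R m) (Gs : {set dag_t m}).
Hypothesis hne : Gs != finset.set0.
Hypothesis hdag : forall G, G \in Gs -> is_dag G.

Lemma sp_pos G (S : {ffun 'I_n -> config m}) : 0 < sample_prob Th G S :> R.
Proof. by apply: prodr_gt0 => k _; apply: joint_pos. Qed.

Lemma sp_sum G : G \in Gs -> \sum_(S : {ffun 'I_n -> config m}) sample_prob Th G S = 1 :> R.
Proof.
move=> hG; rewrite /sample_prob -(bigA_distr_bigA (fun (k : 'I_n) x => joint Th G x)) /=.
by rewrite (@joint_sum R m Th G (hdag hG)) big1.
Qed.
End D.
Section D2.
Variables (R : realType) (m n : nat) (Th : param R m) (Gs : {set dag_t m}).
Hypothesis hne : Gs != finset.set0.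
Hypothesis hdag : forall G, G \in Gs -> is_dag G.
Let c : R := 2 ^+ (m * n).
Let cT := {ffun 'I_n -> config m}.

Lemma c_pos : 0 < c. Proof. by rewrite /c exprn_gt0. Qed.

Lemma sp_le G (S : cT) : sample_prob Th G S * c <= expR (n%:R * (Ltot Th G / 2)).
Proof.
have -> : sample_prob Th G S * c = \prod_(k < n) (joint Th G (S k) * 2 ^+ m).
  by rewrite big_split /= prodr_const card_ord /c exprM.
have -> : n%:R * (Ltot Th G / 2) = \sum_(k < n) (Ltot Th G / 2) :> R.
  by rewrite sumr_const card_ord mulr_natl.
rewrite expR_sum; apply: ler_prod => k _.
by rewrite mulr_ge0 ?(ltW (joint_pos _ _ _)) ?joint_le.
Qed.

Lemma ln_sp_le G (S : cT) : ln (sample_prob Th G S * c) <= n%:R * (Ltot Th G / 2).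
Proof.
rewrite -[X in _ <= X]expRK ler_ln ?sp_le // posrE ?expR_gt0 //.
by rewrite mulr_gt0 ?sp_pos ?c_pos.
Qed.

Let w : R := #|Gs|%:R^-1.

Lemma w_sum : \sum_(G in Gs) w = 1.
Proof.
rewrite sumr_const /w -[_ *+ _]mulr_natr mulVf //.
by rewrite pnatr_eq0 -lt0n card_gt0.
Qed.

Lemma pm_pos (S : cT) : 0 < sample_marg Th Gs S.
Proof.
case/set0Pn: hne => G0 hG0.
rewrite /sample_marg (bigD1 G0 hG0) /=.
have h1 : 0 < w * sample_prob Th G0 S.
  by rewrite mulr_gt0 ?sp_pos // /w invr_gt0 ltr0n card_gt0 hne.
have h2 : 0 <= \sum_(G in Gs | G != G0) w * sample_prob Th G S.
  apply: sumr_ge0 => G _; apply: mulr_ge0; [by rewrite /w invr_ge0 | apply/ltW/sp_pos].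
move: h1 h2; rewrite /w; lra.
Qed.

Lemma pm_sum : \sum_(S : cT) sample_marg Th Gs S = 1.
Proof.
rewrite /sample_marg exchange_big /= -[RHS]w_sum.
apply: eq_bigr => G hG; rewrite -mulr_sumr.
by rewrite (@sp_sum R m n Th Gs hdag G hG) mulr1.
Qed.
Lemma card_cT : #|{: cT}|%:R = c.
Proof. by rewrite card_ffun card_ffun card_bool !card_ord natrX natrX /c exprM. Qed.

Lemma ln_ge (t : R) : 0 < t -> 1 - t^-1 <= ln t.
Proof.
move=> ht.
have hi : 0 < t^-1 by rewrite invr_gt0.
have h : ln (1 + (t^-1 - 1)) <= t^-1 - 1 by apply: le_ln1Dx; lra.
move: h; rewrite addrC subrK lnV ?posrE //; lra.
Qed.

Lemma gibbs : 0 <= \sum_(S : cT) sample_marg Th Gs S * ln (sample_marg Th Gs S * c).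
Proof.
have hc := c_pos.
apply: (@le_trans _ _ (\sum_(S : cT) (sample_marg Th Gs S - c^-1))).
  rewrite sumrB pm_sum sumr_const -[_ *+ _]mulr_natr card_cT mulVf ?subrr //.
  by rewrite lt0r_neq0.
apply: ler_sum => S _.
have hp := pm_pos S.
have ht : 0 < sample_marg Th Gs S * c by rewrite mulr_gt0.
have := ln_ge ht.
move=> h; apply: (@le_trans _ _ (sample_marg Th Gs S * (1 - (sample_marg Th Gs S * c)^-1))).
  rewrite mulrBr mulr1 invfM mulrA mulfV ?mul1r //; by rewrite lt0r_neq0.
by rewrite ler_pM2l.
Qed.
Lemma MI_le (K : R) : (forall G, G \in Gs -> n%:R * (Ltot Th G / 2) <= K) ->
  mutual_info n Th Gs <= K.
Proof.
move=> hK.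
have hc := c_pos.
pose pm (S : cT) := sample_marg Th Gs S.
have e : forall G (S : cT), ln (sample_prob Th G S / pm S)
    = ln (sample_prob Th G S * c) - ln (pm S * c).
  move=> G S; have h1 := sp_pos Th G S; have h2 := pm_pos S.
  have -> : sample_prob Th G S / pm S = (sample_prob Th G S * c) * (pm S * c)^-1.
    by field; rewrite ?lt0r_neq0.
  by rewrite lnM ?lnV ?posrE ?mulr_gt0 ?invr_gt0 ?mulr_gt0.
have -> : mutual_info n Th Gs =
   \sum_(G in Gs) w * \sum_(S : cT) sample_prob Th G S * ln (sample_prob Th G S * c)
   - \sum_(S : cT) pm S * ln (pm S * c).
  rewrite /mutual_info.
  have -> : \sum_(S : cT) pm S * ln (pm S * c) =
     \sum_(G in Gs) w * \sum_(S : cT) sample_prob Th G S * ln (pm S * c).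
    symmetry; under eq_bigr do rewrite mulr_sumr.
    rewrite exchange_big /=; apply: eq_bigr => S _.
    rewrite /pm /sample_marg [RHS]mulr_suml; apply: eq_bigr => G _.
    by rewrite mulrA.
  rewrite -sumrB; apply: eq_bigr => G _.
  rewrite -mulrBr -sumrB; congr (_ * _); apply: eq_bigr => S _.
  by rewrite e mulrBr.
have hg := gibbs.
suff : \sum_(G in Gs) w * \sum_(S : cT) sample_prob Th G S * ln (sample_prob Th G S * c) <= K.
  by rewrite /pm in hg *; lra.
rewrite -[K]mul1r -w_sum mulr_suml; apply: ler_sum => G hG.
have hw : 0 <= w by rewrite invr_ge0.
apply: ler_wpM2l => //.
apply: (@le_trans _ _ (\sum_(S : cT) sample_prob Th G S * K)).
  apply: ler_sum => S _; apply: ler_wpM2l; first exact/ltW/sp_pos.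
  exact: (le_trans (ln_sp_le G S) (hK G hG)).
by rewrite -mulr_suml (@sp_sum R m n Th Gs hdag G hG) mul1r.
Qed.
End D2.


Lemma expDelta_le (R : realType) m (Th : param R m) G i : is_dag G ->
  expected_Delta Th G i <= l1norm Th G i / 2.
Proof.
move=> hG.
rewrite /expected_Delta.
apply: (@le_trans _ _ (\sum_x joint Th G x * (l1norm Th G i / 2))); last first.
  by rewrite -mulr_suml (joint_sum Th hG) mul1r.
apply: ler_sum => x _; apply: ler_wpM2l; first exact/ltW/joint_pos.
apply: (le_trans (Delta0_le _)); apply: ler_wpM2r => //; exact: eta_le.
Qed.

Unset Implicit Arguments.
Local Open Scope classical_set_scope.
Local Open Scope ereal_scope.

Theorem lemma10 (R : realType) (m n : nat) (Gs : {set dag_t m})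
  (P : set (param R m)) :
  Gs != finset.set0 ->
  (forall G, G \in Gs -> is_dag G) ->
  Delta_max P Gs <= w1max P Gs * (2^-1)%:E /\
  sup_MI n P Gs <= (n * m)%:R%:E * w1max P Gs * (2^-1)%:E.
Proof.
move=> hne hdag.
have ub : forall Th G i, P Th -> G \in Gs -> (l1norm Th G i)%:E <= w1max P Gs.
  move=> Th G i PTh hG; apply: ereal_sup_ubound.
  by exists Th; split => //; exists G; split => //; exists i.
split.
  apply: ge_ereal_sup => _ [Th [PTh [G [hG [i ->]]]]].
  apply: (@le_trans _ _ ((l1norm Th G i)%:E * (2^-1)%:E)).
    by rewrite -EFinM lee_fin; exact: expDelta_le (hdag G hG).
  by apply: lee_wpmul2r; [rewrite lee_fin | exact: ub].
apply: ge_ereal_sup => _ [Th [PTh ->]].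
have [hz|hpos] := eqVneq (n * m)%N 0%N.
  rewrite hz mul0e mul0e lee_fin; apply: (MI_le hne hdag) => G hG.
  move/eqP: hz; rewrite muln_eq0 => /orP [/eqP -> | /eqP hm].
    by rewrite mul0r.
  subst m; by rewrite /Ltot big_ord0 mul0r mulr0.
have [G0 hG0] := set0Pn _ hne.
have m0 : (0 < m)%N by move: hpos; rewrite muln_eq0 negb_or lt0n => /andP [].
have n0 : (0 < n)%N by move: hpos; rewrite muln_eq0 negb_or lt0n => /andP [].
have l0 := ub Th G0 (Ordinal m0) PTh hG0.
have l0ge : (0 <= l1norm Th G0 (Ordinal m0))%R by apply: sumr_ge0.
case E: (w1max P Gs) => [r| |]; rewrite E in l0 ub.
- rewrite -!EFinM lee_fin; apply: (MI_le hne hdag) => G hG.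
  have hL : (Ltot Th G <= m%:R * r)%R.
    apply: (@le_trans _ _ (\sum_(i < m) r)%R); last by rewrite sumr_const card_ord mulr_natl.
    by apply: ler_sum => i _; rewrite -lee_fin; apply: ub.
  have hn : (0 <= n%:R :> R)%R by [].
  rewrite natrM.
  have := ler_wpM2l hn hL; lra.
- rewrite gt0_muley ?gt0_mulye ?leey // lte_fin ?invr_gt0 // ltr0n.
  by rewrite lt0n.
- by move: l0; rewrite leNgt ltNye.
Qed.
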